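(* Let $\mathbf{k}$ be a field, $\sigma\subset N_{\mathbb{Q}}$ a nonzero strongly convex polyhedral cone, and $\partial$ a nontrivial homogeneous LFIHD of degree $e$ on $A=\mathbf{k}[\sigma^\vee\cap M]$. Then: (i) there is a ray $\rho$ of $\sigma$ such that $\ker\partial=\mathbf{k}[\rho^\star\cap M]$, where $\rho^\star=\{m\in\sigma^\vee:\langle m,\rho\rangle=0\}$; (ii) $e$ is a Demazure root of $\sigma$ with distinguished ray $\rho$.
   Context: An LFIHD (locally finite iterative higher derivation) on a $\mathbf{k}$-algebra $A$ is a sequence $\partial=(\partial^{(i)})_{i\in\mathbb{N}}$ of $\mathbf{k}$-linear maps $A\to A$ with $\partial^{(0)}=\mathrm{id}$, $\partial^{(i)}(fg)=\sum_{j=0}^i\partial^{(j)}(f)\partial^{(i-j)}(g)$, for each $f$ there is $r$ with $\partial^{(i)}(f)=0$ for $i\ge r$, and $\partial^{(i)}\circ\partial^{(j)}=\binom{i+j}{i}\partial^{(i+j)}$. Its kernel is $\{f:\partial^{(i)}(f)=0\ \forall i>0\}$; it is trivial if the kernel is $A$. For an $M$-graded $A$, $\partial$ is homogeneous of degree $e\in M$ if $\partial^{(i)}(A_m)\subset A_{m+ie}$ for all $i,m$. A ray of $\sigma$ is identified with its primitive lattice vector in $N$. A Demazure root of $\sigma$ is $e\in M$ such that there is a ray $\rho$ of $\sigma$ with $\langle e,\rho\rangle=-1$ and $\langle e,\rho'\rangle\ge0$ for every other ray $\rho'$; $\rho$ is its distinguished ray. *)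

(* Defs.v *)
From HB Require Import structures.
From mathcomp Require Import all_boot all_order all_algebra.
Set Implicit Arguments. Unset Strict Implicit. Unset Printing Implicit Defensive.
Import Order.TTheory GRing.Theory Num.Theory.
Local Open Scope ring_scope.

(* Lattices N = M = Z^n (row vectors), N_Q = M_Q = Q^n, pairing = dot product. *)
Definition lat n := 'rV[int]_n.
Definition latQ n := 'rV[rat]_n.
Definition toQ n (v : lat n) : latQ n := map_mx (fun z : int => z%:~R) v.

Definition pairQ n (u v : latQ n) : rat := \sum_(i < n) u 0 i * v 0 i.
Definition pairZ n (m v : lat n) : int := \sum_(i < n) m 0 i * v 0 i.

Definition in_cone n (gens : seq (lat n)) (v : latQ n) : Prop :=
  exists lam : 'I_(size gens) -> rat,
    (forall i, 0 <= lam i) /\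
    v = \sum_(i < size gens) lam i *: toQ (nth 0 gens i).

Definition strongly_convex n (gens : seq (lat n)) : Prop :=
  forall v, in_cone gens v -> in_cone gens (- v) -> v = 0.

Definition nonzero_cone n (gens : seq (lat n)) : Prop :=
  exists v, in_cone gens v /\ v != 0.

Definition in_dualQ n (gens : seq (lat n)) (u : latQ n) : Prop :=
  forall v, in_cone gens v -> 0 <= pairQ u v.
Definition in_dualM n (gens : seq (lat n)) (m : lat n) : Prop :=
  in_dualQ gens (toQ m).

Definition primitive n (r : lat n) : Prop :=
  forall (d : int) (v : lat n), r = d *: v -> d = 1 \/ d = -1.

(* rho is (the primitive lattice vector of) a ray of sigma: Q_{>=0} rho is a
   one-dimensional face sigma ∩ u^perp with u in sigma^vee. *)
Definition is_ray n (gens : seq (lat n)) (rho : lat n) : Prop :=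
  primitive rho /\
  exists u, in_dualQ gens u /\
    forall v, (in_cone gens v /\ pairQ u v = 0) <->
              exists t : rat, 0 <= t /\ v = t *: toQ rho.

Definition demazure_root_with n (gens : seq (lat n)) (e rho : lat n) : Prop :=
  is_ray gens rho /\ pairZ e rho = -1 /\
  forall rho', is_ray gens rho' -> rho' <> rho -> 0 <= pairZ e rho'.

(* A together with chi : M -> A is the semigroup algebra k[sigma^vee ∩ M]:
   (chi m)_{m in sigma^vee ∩ M} is a k-basis of A, chi 0 = 1 and
   chi (m + m') = chi m * chi m'. (Values of chi off sigma^vee ∩ M are irrelevant.) *)
Definition is_semigroup_algebra (k : fieldType) (A : comAlgType k) n
    (S : lat n -> Prop) (chi : lat n -> A) : Prop :=
  [/\ chi 0 = 1,
      (forall m m', S m -> S m' -> chi (m + m') = chi m * chi m'),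
      (forall f : A, exists (s : seq (lat n)) (c : lat n -> k),
           (forall m, m \in s -> S m) /\ f = \sum_(m <- s) c m *: chi m) &
      (forall (s : seq (lat n)) (c : lat n -> k), uniq s ->
           (forall m, m \in s -> S m) ->
           \sum_(m <- s) c m *: chi m = 0 -> forall m, m \in s -> c m = 0)].

Definition in_piece (k : fieldType) (A : comAlgType k) n
    (S : lat n -> Prop) (chi : lat n -> A) (m : lat n) (f : A) : Prop :=
  (S m /\ exists c : k, f = c *: chi m) \/ (~ S m /\ f = 0).

Definition is_LFIHD (k : fieldType) (A : comAlgType k) (D : nat -> A -> A) : Prop :=
  [/\ (forall i (a : k) (f g : A), D i (a *: f + g) = a *: D i f + D i g),
      (forall f, D 0%N f = f),
      (forall i f g, D i (f * g) = \sum_(j < i.+1) D j f * D (i - j)%N g),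
      (forall f, exists r, forall i, (r <= i)%N -> D i f = 0) &
      (forall i j f, D i (D j f) = D (i + j)%N f *+ 'C(i + j, i))].

Definition in_kernel (k : fieldType) (A : comAlgType k) (D : nat -> A -> A) (f : A) :=
  forall i, (0 < i)%N -> D i f = 0.

Definition trivial_LFIHD (k : fieldType) (A : comAlgType k) (D : nat -> A -> A) :=
  forall f, in_kernel D f.

Definition homogeneous_of_degree (k : fieldType) (A : comAlgType k) n
    (S : lat n -> Prop) (chi : lat n -> A) (D : nat -> A -> A) (e : lat n) :=
  forall i m f, in_piece S chi m f -> in_piece S chi (m + e *+ i) (D i f).

Definition in_face_algebra (k : fieldType) (A : comAlgType k) n
    (gens : seq (lat n)) (chi : lat n -> A) (rho : lat n) (f : A) : Prop :=
  exists (s : seq (lat n)) (c : lat n -> k),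
    (forall m, m \in s -> in_dualM gens m /\ pairZ m rho = 0) /\
    f = \sum_(m <- s) c m *: chi m.

(* Main.v *)
Require Import Defs.
From HB Require Import structures.
From mathcomp Require Import all_boot all_order all_algebra.
From mathcomp Require Import ring lra zify.
From Stdlib Require Import ClassicalEpsilon Classical.
Set Implicit Arguments. Unset Strict Implicit. Unset Printing Implicit Defensive.
Import Order.TTheory GRing.Theory Num.Theory.
Local Open Scope ring_scope.

Section PairQ.
Variable n : nat.
Implicit Types u v w : latQ n.

Lemma pairQC u v : pairQ u v = pairQ v u.
Proof. by apply: eq_bigr => i _; rewrite mulrC. Qed.
Lemma pairQDl u v w : pairQ (u + v) w = pairQ u w + pairQ v w.
Proof. by rewrite /pairQ -big_split; apply: eq_bigr => i _; rewrite mxE mulrDl. Qed.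
Lemma pairQZl (a : rat) u w : pairQ (a *: u) w = a * pairQ u w.
Proof. by rewrite /pairQ mulr_sumr; apply: eq_bigr => i _; rewrite mxE mulrA. Qed.
Lemma pairQNl u w : pairQ (- u) w = - pairQ u w.
Proof. by rewrite -scaleN1r pairQZl mulN1r. Qed.
Lemma pairQBl u v w : pairQ (u - v) w = pairQ u w - pairQ v w.
Proof. by rewrite pairQDl pairQNl. Qed.
Lemma pairQ0l w : pairQ 0 w = 0.
Proof. by rewrite -(scale0r (0 : latQ n)) pairQZl mul0r. Qed.
Lemma pairQDr u v w : pairQ w (u + v) = pairQ w u + pairQ w v.
Proof. by rewrite !(pairQC w) pairQDl. Qed.
Lemma pairQZr (a : rat) u w : pairQ w (a *: u) = a * pairQ w u.
Proof. by rewrite !(pairQC w) pairQZl. Qed.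
Lemma pairQNr u w : pairQ w (- u) = - pairQ w u.
Proof. by rewrite !(pairQC w) pairQNl. Qed.
Lemma pairQBr u v w : pairQ w (u - v) = pairQ w u - pairQ w v.
Proof. by rewrite !(pairQC w) pairQBl. Qed.
Lemma pairQ0r w : pairQ w 0 = 0.
Proof. by rewrite pairQC pairQ0l. Qed.
Lemma pairQ_gt0 u : u != 0 -> 0 < pairQ u u.
Proof.
move=> nz; have [i Hi] : exists i, u 0 i != 0.
  apply/existsP; apply: contraR nz => /existsPn H; apply/eqP/matrixP => a j.
  by rewrite (ord1 a) mxE; apply/eqP; move: (H j); rewrite negbK.
rewrite /pairQ (bigD1 i) //=.
have h1 : 0 <= \sum_(j < n | j != i) u 0 j * u 0 j.
  by apply: sumr_ge0 => j _; rewrite -expr2 sqr_ge0.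
have h2 : 0 < u 0 i * u 0 i by rewrite -expr2 exprn_even_gt0.
by apply: (lt_le_trans h2); rewrite lerDl.
Qed.
End PairQ.

Fixpoint qc n (gs : seq (latQ n)) (b : latQ n) : Prop :=
  match gs with
  | [::] => b = 0
  | a :: gs' => exists t : rat, 0 <= t /\ qc gs' (b - t *: a)
  end.

Section QC.
Variable n : nat.
Implicit Types (gs : seq (latQ n)) (u v w x y a b : latQ n).

Lemma qc0 gs : qc gs 0.
Proof. elim: gs => [|a gs IH] //=; exists 0; by rewrite scale0r subr0. Qed.

Lemma qc_mem gs a : a \in gs -> qc gs a.
Proof.
elim: gs => [|x gs IH] //=; rewrite inE => /orP [/eqP->|H].
  by exists 1; rewrite scale1r subrr; split; [exact: ler01|exact: qc0].
by exists 0; rewrite scale0r subr0; split; [exact: lexx|exact: IH].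
Qed.

Lemma qc_add gs x y : qc gs x -> qc gs y -> qc gs (x + y).
Proof.
elim: gs x y => [|a gs IH] x y /=; first by move=> -> ->; rewrite addr0.
move=> [t1 [h1 q1]] [t2 [h2 q2]]; exists (t1 + t2); split; first exact: addr_ge0.
have -> : x + y - (t1 + t2) *: a = (x - t1 *: a) + (y - t2 *: a).
  by apply/matrixP => i j; rewrite !mxE; ring.
exact: IH.
Qed.

Lemma qc_scale gs c x : 0 <= c -> qc gs x -> qc gs (c *: x).
Proof.
elim: gs x => [|a gs IH] x hc /=; first by move=> ->; rewrite scaler0.
move=> [t [ht q]]; exists (c * t); split; first exact: mulr_ge0.
by rewrite -scalerA -scalerBr; apply: IH.
Qed.

Lemma qc_pair gs u x : (forall g, g \in gs -> 0 <= pairQ u g) -> qc gs x -> 0 <= pairQ u x.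
Proof.
elim: gs x => [|a gs IH] x /= hg; first by move=> ->; rewrite pairQ0r.
move=> [t [ht q]]; have -> : x = (x - t *: a) + t *: a by rewrite subrK.
rewrite pairQDr pairQZr addr_ge0 //.
  by apply: IH => // g hgs; apply: hg; rewrite inE hgs orbT.
by rewrite mulr_ge0 // hg // inE eqxx.
Qed.

Lemma qc_proj gs a (phi : latQ n -> rat) x :
  (forall g, g \in gs -> phi g <= 0) ->
  qc (map (fun g => g - phi g *: a) gs) x -> exists c, 0 <= c /\ qc gs (x - c *: a).
Proof.
elim: gs x => [|g gs IH] x /= hphi.
  by move=> ->; exists 0; rewrite scale0r subr0 lexx.
move=> [t [ht q]].
have hphi' : forall g', g' \in gs -> phi g' <= 0.
  by move=> g' hg'; apply: hphi; rewrite inE hg' orbT.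
have [c [hc q']] := IH _ hphi' q.
have hg : phi g <= 0 by apply: hphi; rewrite inE eqxx.
exists (c - t * phi g); split.
  by rewrite subr_ge0; apply: (le_trans _ hc); rewrite mulr_ge0_le0.
exists t; split => //.
have -> : x - (c - t * phi g) *: a - t *: g = x - t *: (g - phi g *: a) - c *: a.
  by apply/matrixP => i j; rewrite !mxE; ring.
exact: q'.
Qed.

Lemma farkas_aux k : forall gs b, size gs = k ->
  qc gs b \/ exists y, (forall g, g \in gs -> 0 <= pairQ y g) /\ pairQ y b < 0.
Proof.
elim: k => [|k IH] [|a gs] b //= hs.
  case: (eqVneq b 0) => [->|nz]; first by left.
  right; exists (- b); split => //; by rewrite pairQNl oppr_lt0 pairQ_gt0.
case: hs => hs.
case: (IH gs b hs) => [q|[y [hy hb]]].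
  by left; exists 0; rewrite scale0r subr0; split.
case: (leP 0 (pairQ y a)) => ha.
  right; exists y; split => // g; rewrite inE => /orP[/eqP->|]//; exact: hy.
set phi := fun g => pairQ y g / pairQ y a.
set h := fun g => g - phi g *: a.
have hphi : forall g, g \in gs -> phi g <= 0.
  by move=> g hg; rewrite /phi mulr_ge0_le0 ?hy // invr_le0 ltW.
have hya : pairQ y a != 0 by rewrite lt_eqF.
case: (IH (map h gs) (h b)); first by rewrite size_map.
  move=> q; have [c [hc q']] := qc_proj hphi q.
  left; exists (phi b + c); split.
    apply: addr_ge0 => //; apply: ltW; rewrite /phi nmulr_rgt0 ?invr_lt0 //.
  have -> : b - (phi b + c) *: a = h b - c *: a.
    by rewrite /h; apply/matrixP => i j; rewrite !mxE; ring.
  exact: q'.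
move=> [z [hz hzb]].
right; exists (z - (pairQ z a / pairQ y a) *: y); split.
  move=> g; rewrite inE => /orP [/eqP->|hg].
    rewrite pairQBl pairQZl divfK // subrr //.
  have -> : pairQ (z - pairQ z a / pairQ y a *: y) g = pairQ z (h g).
    by rewrite /h /phi pairQBl pairQZl pairQBr pairQZr; ring.
  by apply: hz; apply: map_f.
have -> : pairQ (z - pairQ z a / pairQ y a *: y) b = pairQ z (h b).
  by rewrite /h /phi pairQBl pairQZl pairQBr pairQZr; ring.
exact: hzb.
Qed.

Lemma farkas gs b :
  qc gs b \/ exists y, (forall g, g \in gs -> 0 <= pairQ y g) /\ pairQ y b < 0.
Proof. exact: (@farkas_aux (size gs)). Qed.

End QC.

Lemma in_cone_qc n (gens : seq (lat n)) v : in_cone gens v <-> qc (map (@toQ n) gens) v.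
Proof.
split.
  elim: gens v => [|g gs IH] v [lam [hl ->]] /=; first by rewrite big_ord0.
  exists (lam ord0); split => //.
  rewrite big_ord_recl /= addrAC subrr add0r; apply: IH.
  by exists (fun i => lam (lift ord0 i)); split.
elim: gens v => [|g gs IH] v /=.
  by move=> ->; exists (fun i => 0); split => //; rewrite big_ord0.
move=> [t [ht /IH [lam [hl hv]]]].
exists (fun i : 'I_(size gs).+1 => if unlift ord0 i is Some j then lam j else t); split.
  by move=> i; case: unliftP.
rewrite big_ord_recl unlift_none /=.
under eq_bigr => i _ do rewrite liftK.
by rewrite -hv addrC subrK.
Qed.

Section Lat.
Variable n : nat.
Implicit Types (m g a b : lat n) (u : latQ n) (gens : seq (lat n)).

Lemma toQD a b : toQ (a + b) = toQ a + toQ b.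
Proof. by apply/matrixP => i j; rewrite !mxE intrD. Qed.
Lemma toQN a : toQ (- a) = - toQ a.
Proof. by apply/matrixP => i j; rewrite !mxE intrN. Qed.
Lemma toQB a b : toQ (a - b) = toQ a - toQ b.
Proof. by rewrite toQD toQN. Qed.
Lemma toQZ (z : int) a : toQ (z *: a) = z%:~R *: toQ a.
Proof. by apply/matrixP => i j; rewrite !mxE intrM. Qed.
Lemma toQ0 : toQ (0 : lat n) = 0.
Proof. by apply/matrixP => i j; rewrite !mxE. Qed.
Lemma toQMn a k : toQ (a *+ k) = toQ a *+ k.
Proof. by elim: k => [|k IH]; [rewrite !mulr0n toQ0|rewrite !mulrS toQD IH]. Qed.
Lemma toQ_inj : injective (@toQ n).
Proof.
move=> a b h; apply/matrixP => i j.
by have := congr1 (fun M : latQ n => M i j) h; rewrite !mxE => /intr_inj.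
Qed.

Lemma pairQ_toQ a b : pairQ (toQ a) (toQ b) = (pairZ a b)%:~R.
Proof. by rewrite /pairQ /pairZ rmorph_sum; apply: eq_bigr => i _; rewrite !mxE rmorphM. Qed.

Lemma pairZC a b : pairZ a b = pairZ b a.
Proof. by apply: eq_bigr => i _; rewrite mulrC. Qed.
Lemma pairZDl a b g : pairZ (a + b) g = pairZ a g + pairZ b g.
Proof. by rewrite /pairZ -big_split; apply: eq_bigr => i _; rewrite mxE mulrDl. Qed.
Lemma pairZZl (z : int) a g : pairZ (z *: a) g = z * pairZ a g.
Proof. by rewrite /pairZ mulr_sumr; apply: eq_bigr => i _; rewrite mxE mulrA. Qed.
Lemma pairZNl a g : pairZ (- a) g = - pairZ a g.
Proof. by rewrite -scaleN1r pairZZl mulN1r. Qed.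
Lemma pairZBl a b g : pairZ (a - b) g = pairZ a g - pairZ b g.
Proof. by rewrite pairZDl pairZNl. Qed.
Lemma pairZ0l g : pairZ 0 g = 0.
Proof. by rewrite -(scale0r (0 : lat n)) pairZZl mul0r. Qed.
Lemma pairZMnl a k g : pairZ (a *+ k) g = pairZ a g *+ k.
Proof. by rewrite -scaler_nat pairZZl mulr_natl. Qed.
Lemma pairZDr a b g : pairZ g (a + b) = pairZ g a + pairZ g b.
Proof. by rewrite !(pairZC g) pairZDl. Qed.
Lemma pairZZr (z : int) a g : pairZ g (z *: a) = z * pairZ g a.
Proof. by rewrite !(pairZC g) pairZZl. Qed.
Lemma pairZNr a g : pairZ g (- a) = - pairZ g a.
Proof. by rewrite !(pairZC g) pairZNl. Qed.
Lemma pairZBr a b g : pairZ g (a - b) = pairZ g a - pairZ g b.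
Proof. by rewrite !(pairZC g) pairZBl. Qed.
Lemma pairZ0r g : pairZ g 0 = 0.
Proof. by rewrite pairZC pairZ0l. Qed.
Lemma pairZMnr a k g : pairZ g (a *+ k) = pairZ g a *+ k.
Proof. by rewrite !(pairZC g) pairZMnl. Qed.

Lemma in_dualQ_iff gens u :
  in_dualQ gens u <-> forall g, g \in gens -> 0 <= pairQ u (toQ g).
Proof.
split => [h g hg|h v /in_cone_qc hv].
  by apply: h; apply/in_cone_qc; apply: qc_mem; apply: map_f.
apply: qc_pair hv => g' /mapP [g hg ->]; exact: h.
Qed.

Lemma in_dualM_iff gens m :
  in_dualM gens m <-> forall g, g \in gens -> 0 <= pairZ m g.
Proof.
rewrite /in_dualM in_dualQ_iff; split => h g hg; have := h g hg;
  by rewrite pairQ_toQ ler0z.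
Qed.

Lemma in_cone_gen gens g : g \in gens -> in_cone gens (toQ g).
Proof. by move=> hg; apply/in_cone_qc; apply: qc_mem; apply: map_f. Qed.

Lemma rat_scale u : exists (N : int) (m : lat n), 0 < N /\ toQ m = N%:~R *: u.
Proof.
pose N := \prod_(i < n) denq (u 0 i).
exists N, (\row_i (numq (u 0 i) * \prod_(j < n | j != i) denq (u 0 j))).
split; first by apply: prodr_gt0 => i _; exact: denq_gt0.
apply/matrixP => a i; rewrite (ord1 a) !mxE.
rewrite /N [\prod_(j < n) _](bigD1 i) //= !intrM numqE; ring.
Qed.
End Lat.

Section Geo.
Variable n : nat.
Implicit Types (m g : lat n) (u x w : latQ n) (gens : seq (lat n)).

Lemma in_cone_scale gens c x : 0 <= c -> in_cone gens x -> in_cone gens (c *: x).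
Proof. by move=> hc /in_cone_qc h; apply/in_cone_qc; apply: qc_scale. Qed.

Lemma in_cone_add gens x w : in_cone gens x -> in_cone gens w -> in_cone gens (x + w).
Proof. by move=> /in_cone_qc h1 /in_cone_qc h2; apply/in_cone_qc; apply: qc_add. Qed.

Lemma dualQ_cone gens u x : in_dualQ gens u -> in_cone gens x -> 0 <= pairQ u x.
Proof. by move=> h; apply: h. Qed.

Lemma qc_zero (gs : seq (latQ n)) u x :
  (forall a, a \in gs -> 0 <= pairQ u a /\ (a != 0 -> 0 < pairQ u a)) ->
  qc gs x -> pairQ u x = 0 -> x = 0.
Proof.
elim: gs x => [|a gs IH] x /= hg; first by move=> ->.
move=> [t [ht q]] hx.
have [ha1 ha2] := hg a (mem_head _ _).
have hg' : forall a', a' \in gs -> 0 <= pairQ u a' /\ (a' != 0 -> 0 < pairQ u a').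
  by move=> a' h; apply: hg; rewrite inE h orbT.
have h1 : 0 <= pairQ u (x - t *: a) by apply: qc_pair q => a' /hg' [].
have h2 : 0 <= t * pairQ u a by apply: mulr_ge0.
have e1 : pairQ u x = pairQ u (x - t *: a) + t * pairQ u a.
  by rewrite pairQBr pairQZr subrK.
have z1 : pairQ u (x - t *: a) = 0 by apply/eqP; rewrite eq_le h1 andbT; lra.
have z2 : t * pairQ u a = 0 by lra.
have := IH _ hg' q z1 => /eqP; rewrite subr_eq0 => /eqP ->.
case: (eqVneq a 0) => [->|nz]; first by rewrite scaler0.
move/eqP: z2; rewrite mulf_eq0 => /orP [/eqP ->|]; first by rewrite scale0r.
by rewrite gt_eqF // ha2.
Qed.

Lemma gordan gens : strongly_convex gens ->
  exists m0, in_dualM gens m0 /\ forall g, g \in gens -> g != 0 -> 0 < pairZ m0 g.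
Proof.
move=> sc.
have H : forall l : seq (lat n), exists y, in_dualQ gens y /\
    forall g, g \in l -> g \in gens -> g != 0 -> 0 < pairQ y (toQ g).
  elim => [|g l [y [hy hl]]].
    by exists 0; split => // v _; rewrite pairQ0l.
  case: (boolP ((g \in gens) && (g != 0))) => [/andP [gin gnz]|hng].
    case: (farkas (map (@toQ n) gens) (- toQ g)) => [q|[y' [hy' hb]]].
      have h1 : in_cone gens (toQ g) by apply: in_cone_gen.
      have := sc _ h1 (proj2 (in_cone_qc _ _) q).
      by rewrite -toQ0 => /toQ_inj /eqP; rewrite (negbTE gnz).
    have hy'd : in_dualQ gens y'.
      by apply/in_dualQ_iff => g' hg'; apply: hy'; apply: map_f.
    exists (y + y'); split.
      by move=> v hv; rewrite pairQDl addr_ge0 //; [apply: hy|apply: hy'd].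
    move=> g'; rewrite inE => /orP [/eqP -> _ _|hg' h1 h2].
      have z1 : 0 <= pairQ y (toQ g) by apply: hy; apply: in_cone_gen.
      move: hb; rewrite pairQDl pairQNr oppr_lt0 => z2; lra.
    have z1 : 0 < pairQ y (toQ g') by exact: hl.
    have z2 : 0 <= pairQ y' (toQ g') by apply: hy'd; apply: in_cone_gen.
    rewrite pairQDl; lra.
  exists y; split => // g'; rewrite inE => /orP [/eqP ->|]; last exact: hl.
  by move=> h1 h2; move: hng; rewrite h1 h2.
have [y [hy hp]] := H gens.
have [N [m [hN hm]]] := rat_scale y.
have hNQ : 0 < (N%:~R : rat) by rewrite ltr0z.
exists m; split.
  by move=> v hv; rewrite hm pairQZl; apply: mulr_ge0; [exact: ltW | exact: hy].
move=> g hg hnz; rewrite -(ltr0z rat) -pairQ_toQ hm pairQZl mulr_gt0 //.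
exact: hp.
Qed.

Lemma dual_farkas gens x :
  (forall m, in_dualM gens m -> 0 <= pairQ (toQ m) x) -> in_cone gens x.
Proof.
move=> h; case: (farkas (map (@toQ n) gens) x) => [q|[y [hy hb]]].
  exact/in_cone_qc.
have hyd : in_dualQ gens y by apply/in_dualQ_iff => g' hg'; apply: hy; apply: map_f.
have [N [m [hN hm]]] := rat_scale y.
have hNQ : 0 < (N%:~R : rat) by rewrite ltr0z.
have : 0 <= pairQ (toQ m) x.
  by apply: h => v hv; rewrite hm pairQZl; apply: mulr_ge0; [exact: ltW | exact: hyd].
by rewrite hm pairQZl pmulr_rge0 // leNgt hb.
Qed.

Lemma cone_zero gens m0 x :
  in_dualM gens m0 -> (forall g, g \in gens -> g != 0 -> 0 < pairZ m0 g) ->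
  in_cone gens x -> pairQ (toQ m0) x = 0 -> x = 0.
Proof.
move=> hd hp /in_cone_qc q; apply: qc_zero q => a /mapP [g hg ->]; split.
  by apply: hd; apply: in_cone_gen.
move=> nz; rewrite pairQ_toQ ltr0z; apply: hp => //.
by apply: contra nz => /eqP ->; rewrite toQ0.
Qed.
End Geo.

Section Alg.
Variables (k : fieldType) (n : nat) (gens : seq (lat n)) (A : comAlgType k)
  (chi : lat n -> A) (D : nat -> A -> A) (e : lat n).
Local Notation S := (in_dualM gens).
Hypothesis hsa : is_semigroup_algebra S chi.
Hypothesis hD : is_LFIHD D.
Hypothesis hhom : homogeneous_of_degree S chi D e.

Lemma S0 : S 0.
Proof. by apply/in_dualM_iff => g _; rewrite pairZ0l. Qed.
Lemma S_add m m' : S m -> S m' -> S (m + m').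
Proof.
move=> /in_dualM_iff h1 /in_dualM_iff h2; apply/in_dualM_iff => g hg.
by rewrite pairZDl addr_ge0 ?h1 ?h2.
Qed.

Lemma D_add i f g : D i (f + g) = D i f + D i g.
Proof. by case: hD => hl _ _ _ _; have := hl i 1 f g; rewrite !scale1r. Qed.
Lemma D_0 i : D i 0 = 0.
Proof. by apply: (addrI (D i 0)); rewrite -D_add !addr0. Qed.
Lemma D_scale i a f : D i (a *: f) = a *: D i f.
Proof. by case: hD => hl _ _ _ _; have := hl i a f 0; rewrite !addr0 D_0 addr0. Qed.
Lemma D_sum i (s : seq (lat n)) (F : lat n -> A) :
  D i (\sum_(m <- s) F m) = \sum_(m <- s) D i (F m).
Proof.
elim: s => [|x s IH]; first by rewrite !big_nil D_0.
by rewrite !big_cons D_add IH.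
Qed.

Lemma indep (s : seq (lat n)) (c : lat n -> k) : uniq s ->
  (forall m, m \in s -> S m) -> \sum_(m <- s) c m *: chi m = 0 ->
  forall m, m \in s -> c m = 0.
Proof. by case: hsa => _ _ _ h; apply: h. Qed.

Lemma coef_unique m a b : S m -> a *: chi m = b *: chi m -> a = b.
Proof.
move=> hm h; apply/eqP; rewrite -subr_eq0; apply/eqP.
apply: (@indep [:: m] (fun _ => a - b) _ _ _ m) => //; last by rewrite mem_seq1.
  by move=> x; rewrite inE => /eqP ->.
by rewrite big_seq1 scalerBl h subrr.
Qed.

Lemma chi_nz m : S m -> chi m != 0.
Proof.
move=> hm; apply/eqP => h; have := @coef_unique m 1 0 hm.
by rewrite h !scaler0 => /(_ erefl) /eqP; rewrite oner_eq0.
Qed.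

Lemma cex i m : exists c : k,
  S m -> D i (chi m) = c *: chi (m + e *+ i) /\ (c != 0 -> S (m + e *+ i)).
Proof.
case: (classic (S m)) => hm; last by exists 0.
have hp : in_piece S chi m (chi m) by left; split => //; exists 1; rewrite scale1r.
case: (hhom i hp) => [[hS [c hc]]|[hnS ->]].
  by exists c => _; split.
by exists 0 => _; rewrite scale0r; split => //; rewrite eqxx.
Qed.

Definition C i m := proj1_sig (constructive_indefinite_description _ (cex i m)).

Lemma CP i m : S m -> D i (chi m) = C i m *: chi (m + e *+ i).
Proof. by move=> hm; case: (proj2_sig (constructive_indefinite_description _ (cex i m)) hm). Qed.
Lemma CS i m : S m -> C i m != 0 -> S (m + e *+ i).
Proof. by move=> hm; case: (proj2_sig (constructive_indefinite_description _ (cex i m)) hm). Qed.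

Lemma C0 m : S m -> C 0 m = 1.
Proof.
move=> hm; have := CP 0 hm; rewrite mulr0n addr0; case: hD => _ h0 _ _ _.
by rewrite h0 => h; apply/esym/(coef_unique hm); rewrite -h scale1r.
Qed.

Lemma CD0 i m : S m -> D i (chi m) = 0 -> C i m = 0.
Proof.
move=> hm; rewrite CP // => /eqP; rewrite scaler_eq0 => /orP [/eqP //|hc].
case: (eqVneq (C i m) 0) => // nz.
by move: hc; rewrite (negbTE (chi_nz (CS hm nz))).
Qed.

Lemma Cfin m : S m -> exists r, forall i, (r <= i)%N -> C i m = 0.
Proof.
move=> hm; case: hD => _ _ _ hF _; have [r hr] := hF (chi m).
by exists r => i hi; apply: CD0 => //; apply: hr.
Qed.

Lemma Cmul i m m' : S m -> S m' ->
  C i (m + m') = \sum_(j < i.+1) C j m * C (i - j) m'.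
Proof.
move=> hm hm'.
have hmm := S_add hm hm'.
have term : forall j : 'I_i.+1, D j (chi m) * D (i - j) (chi m') =
    (C j m * C (i - j) m') *: chi (m + m' + e *+ i).
  move=> j; rewrite !CP // -scalerAl -scalerAr scalerA.
  case: (eqVneq (C j m * C (i - j) m') 0) => [->|nz]; first by rewrite !scale0r.
  move: nz; rewrite mulf_eq0 negb_or => /andP [n1 n2].
  case: hsa => _ hmul _ _; rewrite -hmul; try by apply: CS.
  congr (_ *: chi _); rewrite addrACA -mulrnDr subnKC //; last by rewrite -ltnS.
have eq1 : C i (m + m') *: chi (m + m' + e *+ i) =
    (\sum_(j < i.+1) C j m * C (i - j) m') *: chi (m + m' + e *+ i).
  rewrite -CP //; case: hsa => _ hmul _ _; rewrite hmul //.
  case: hD => _ _ hL _ _; rewrite hL scaler_suml; apply: eq_bigr => j _; exact: term.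
case: (classic (S (m + m' + e *+ i))) => hS; first exact: coef_unique eq1.
have -> : C i (m + m') = 0.
  by apply/eqP; apply: contraT => nz; case: hS; apply: CS.
apply/esym; apply: big1 => j _; apply/eqP; apply: contraT => nz.
move: nz; rewrite mulf_eq0 negb_or => /andP [n1 n2].
case: hS; have := S_add (CS hm n1) (CS hm' n2).
rewrite addrACA -mulrnDr subnKC //; last by rewrite -ltnS.
Qed.

Lemma Eex m : exists p : {poly k}, S m -> forall i, p`_i = C i m.
Proof.
case: (classic (S m)) => hm; last by exists 0.
have [r hr] := Cfin hm; exists (\poly_(i < r) C i m) => _ i.
by rewrite coef_poly; case: ltnP => // h; rewrite hr.
Qed.

Definition E m := proj1_sig (constructive_indefinite_description _ (Eex m)).
Lemma coefE m i : S m -> (E m)`_i = C i m.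
Proof. by move=> hm; apply: (proj2_sig (constructive_indefinite_description _ (Eex m)) hm). Qed.

Lemma E_nz m : S m -> E m != 0.
Proof. by move=> hm; apply/eqP => h; have := coefE 0 hm; rewrite h coef0 C0 // => /eqP; rewrite eq_sym oner_eq0. Qed.

Lemma Emul m m' : S m -> S m' -> E (m + m') = E m * E m'.
Proof.
move=> hm hm'; apply/polyP => i; rewrite coefM (coefE _ (S_add hm hm')) Cmul //.
by apply: eq_bigr => j _; rewrite !coefE.
Qed.

Definition deg m := (size (E m)).-1.

Lemma deg_add m m' : S m -> S m' -> deg (m + m') = (deg m + deg m')%N.
Proof.
move=> hm hm'; rewrite /deg Emul // size_mul ?E_nz //.
have := E_nz hm; have := E_nz hm'; rewrite -!size_poly_eq0.
case: (size (E m)) => // a; case: (size (E m')) => // b _ _ /=.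
by rewrite addnS.
Qed.

Lemma C_deg m : S m -> C (deg m) m != 0.
Proof.
move=> hm; rewrite -coefE // /deg -lead_coefE lead_coef_eq0; exact: E_nz.
Qed.

Lemma C_big m i : S m -> (deg m < i)%N -> C i m = 0.
Proof.
move=> hm hi; rewrite -coefE //; apply: nth_default.
by move: hi; rewrite /deg; case: (size (E m)).
Qed.

Lemma deg0_C m i : S m -> deg m = 0%N -> (0 < i)%N -> C i m = 0.
Proof. by move=> hm h0 hi; apply: C_big => //; rewrite h0. Qed.

Lemma deg0_ker m i : S m -> deg m = 0%N -> (0 < i)%N -> D i (chi m) = 0.
Proof. by move=> hm h0 hi; rewrite CP // deg0_C // scale0r. Qed.

Lemma key m : S m -> (0 < deg m)%N ->
  S (m + e *+ deg m) /\ deg (m + e *+ deg m) = 0%N.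
Proof.
move=> hm hd; set d := deg m.
have hS := CS hm (C_deg hm); split => //.
case: (leqP (deg (m + e *+ d)) 0) => [|hpos]; first by case: deg.
have hC := C_deg hS; set j := deg (m + e *+ d) in hpos hC.
case: hD => _ _ _ _ hI.
have := hI j d (chi m).
rewrite CP // D_scale CP // scalerA.
rewrite CP // (@C_big m (j + d)) //; last by rewrite -[X in (X < _)%N]add0n ltn_add2r.
rewrite scale0r mul0rn => /eqP; rewrite scaler_eq0 mulf_eq0 (negbTE (C_deg hm)) (negbTE hC) /=.
by rewrite (negbTE (chi_nz (CS hS hC))).
Qed.
End Alg.

Section Lin.
Variables (n : nat) (gens : seq (lat n)) (dg : lat n -> nat) (m0 : lat n).
Local Notation S := (in_dualM gens).
Hypothesis hm0 : S m0.
Hypothesis hpos : forall g, g \in gens -> g != 0 -> 0 < pairZ m0 g.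
Hypothesis hadd : forall m m', S m -> S m' -> dg (m + m') = (dg m + dg m')%N.

Definition nrm (x : lat n) : int := \sum_i `|x 0 i|.
Definition Gz : int := \sum_(g <- gens) nrm g.
Definition NN := (`|Gz|%N).+1.
Definition bb := m0 *+ NN.

Lemma nrm_ge0 x : 0 <= nrm x.
Proof. by apply: sumr_ge0 => i _; exact: normr_ge0. Qed.
Lemma Gz_ge0 : 0 <= Gz.
Proof. by apply: sumr_ge0 => i _; exact: nrm_ge0. Qed.

Lemma nrm0 : nrm 0 = 0.
Proof. by apply: big1 => i _; rewrite mxE normr0. Qed.

Lemma nrmD x y : nrm (x + y) <= nrm x + nrm y.
Proof. by rewrite /nrm -big_split /=; apply: ler_sum => i _; rewrite mxE ler_normD. Qed.

Lemma coord_le g i : g \in gens -> `|g 0 i| <= Gz.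
Proof.
move=> hg; apply: (@le_trans _ _ (nrm g)).
  rewrite /nrm (bigD1 i) //= lerDl; apply: sumr_ge0 => j _; exact: normr_ge0.
rewrite /Gz (big_rem _ hg) /= lerDl; apply: sumr_ge0 => j _; exact: nrm_ge0.
Qed.

Lemma pair_bound x g : g \in gens -> `|pairZ x g| <= nrm x * Gz.
Proof.
move=> hg; apply: (le_trans (ler_norm_sum _ _ _)).
rewrite /nrm mulr_suml; apply: ler_sum => i _.
by rewrite normrM; apply: ler_wpM2l; [exact: normr_ge0 | exact: coord_le].
Qed.

Lemma Sbig x (T : nat) : nrm x <= T%:Z -> S (x + bb *+ T).
Proof.
move=> hT; apply/in_dualM_iff => g hg.
rewrite pairZDl /bb !pairZMnl -mulrnA.
case: (eqVneq g 0) => [->|nz]; first by rewrite !pairZ0r mul0rn addr0.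
have h1 := hpos hg nz.
have h2 := pair_bound x hg.
have h3 := Gz_ge0.
have h4 := nrm_ge0 x.
have hN : (NN%:R : int) = Gz + 1 by rewrite /NN -addn1 natrD natz gez0_abs.
rewrite -mulr_natr natrM hN.
have h5 : - (nrm x * Gz) <= pairZ x g.
  by rewrite lerNl; apply: le_trans h2; rewrite -normrN ler_norm.
set p := pairZ x g in h2 h5 *; set q := pairZ m0 g in h1 *.
rewrite natz.
have h6 : nrm x * Gz <= T%:Z * Gz by apply: ler_wpM2r.
have h7 : (Gz + 1) * T%:Z <= q * ((Gz + 1) * T%:Z).
  rewrite ler_peMl //; first by apply: mulr_ge0; lia.
lia.
Qed.

Lemma S0l : S 0.
Proof. by apply/in_dualM_iff => g _; rewrite pairZ0l. Qed.
Lemma S_addl m m' : S m -> S m' -> S (m + m').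
Proof.
move=> /in_dualM_iff h1 /in_dualM_iff h2; apply/in_dualM_iff => g hg.
by rewrite pairZDl addr_ge0 ?h1 ?h2.
Qed.
Lemma S_mulrn y j : S y -> S (y *+ j).
Proof. by move=> hy; elim: j => [|j IH]; [rewrite mulr0n; exact: S0l | rewrite mulrS; apply: S_addl]. Qed.

Lemma dg0 : dg 0 = 0%N.
Proof. by have := hadd S0l S0l; rewrite addr0 => /eqP; rewrite -{1}[dg 0]addn0 eqn_add2l => /eqP. Qed.

Lemma dg_mulrn y j : S y -> dg (y *+ j) = (dg y * j)%N.
Proof.
move=> hy; elim: j => [|j IH]; first by rewrite mulr0n dg0 muln0.
rewrite mulrS hadd //; last exact: S_mulrn.
by rewrite IH mulnS.
Qed.

Lemma Sbb : S bb.
Proof. by have := @Sbig 0 1; rewrite nrm0 add0r mulr1n; apply. Qed.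

Definition F x : int := (dg (x + bb *+ `|nrm x|%N))%:Z - (`|nrm x|%N)%:Z * (dg bb)%:Z.

Lemma F_T x (T : nat) : nrm x <= T%:Z -> F x = (dg (x + bb *+ T))%:Z - T%:Z * (dg bb)%:Z.
Proof.
move=> hT; have h0 := nrm_ge0 x.
have hle : (`|nrm x|%N <= T)%N by lia.
rewrite /F; set T0 := `|nrm x|%N in hle *.
have hT0 : nrm x <= T0%:Z by rewrite /T0; lia.
rewrite -(subnKC hle); set d := (T - T0)%N.
rewrite mulrnDr addrA (hadd (Sbig hT0) (S_mulrn d Sbb)) dg_mulrn ?Sbb //.
  nia.
exact: Sbb.
Qed.

Lemma F_add x y : F (x + y) = F x + F y.
Proof.
have hx := nrm_ge0 x; have hy := nrm_ge0 y.
set Tx := `|nrm x|%N; set Ty := `|nrm y|%N.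
have ex : nrm x = Tx%:Z by rewrite gez0_abs.
have ey : nrm y = Ty%:Z by rewrite gez0_abs.
rewrite (F_T (T := (Tx + Ty)%N)); last by apply: (le_trans (nrmD x y)); rewrite ex ey PoszD.
rewrite (F_T (T := Tx)) ?ex // (F_T (T := Ty)) ?ey //.
have -> : x + y + bb *+ (Tx + Ty) = (x + bb *+ Tx) + (y + bb *+ Ty).
  by rewrite mulrnDr addrACA.
have hx' : nrm x <= Tx%:Z by rewrite ex.
have hy' : nrm y <= Ty%:Z by rewrite ey.
rewrite (hadd (Sbig hx') (Sbig hy')); nia.
Qed.

Lemma F0 : F 0 = 0.
Proof. by have := F_add 0 0; rewrite addr0; lia. Qed.

Lemma F_neg x : F (- x) = - F x.
Proof. by have := F_add x (- x); rewrite subrr F0; lia. Qed.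

Lemma F_mulrn x j : F (x *+ j) = F x * j%:Z.
Proof.
elim: j => [|j IH]; first by rewrite mulr0n F0 mulr0.
by rewrite mulrS F_add IH -addn1 PoszD; ring.
Qed.

Lemma F_scale (z : int) x : F (z *: x) = z * F x.
Proof.
case: z => j.
  have -> : (Posz j) *: x = x *+ j.
    by apply/matrixP => a b; rewrite !mxE mulmxnE -mulr_natl natz.
  by rewrite F_mulrn mulrC.
have -> : (Negz j) *: x = - (x *+ j.+1).
  by apply/matrixP => a b; rewrite !mxE mulmxnE NegzE mulNr -mulr_natl natz.
by rewrite F_neg F_mulrn NegzE; ring.
Qed.

Lemma F_sum (I : finType) (G : I -> lat n) : F (\sum_i G i) = \sum_i F (G i).
Proof. exact: (big_morph F F_add F0). Qed.

Lemma linearize : exists v, forall m, S m -> (dg m)%:Z = pairZ m v.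
Proof.
exists (\row_j F (delta_mx 0 j)) => m hm.
have hT : nrm m <= (`|nrm m|%N)%:Z by have := nrm_ge0 m; lia.
have h1 : F m = (dg m)%:Z.
  rewrite (F_T hT) (hadd hm (S_mulrn _ Sbb)) dg_mulrn ?Sbb //; last exact: Sbb.
  rewrite PoszD !PoszM; ring.
rewrite -h1 {1}(matrix_sum_delta m) big_ord1 F_sum /pairZ.
by apply: eq_bigr => j _; rewrite F_scale mxE.
Qed.
End Lin.

Lemma pairQMnl n (x w : latQ n) j : pairQ (x *+ j) w = pairQ x w *+ j.
Proof. by rewrite -scaler_nat pairQZl mulr_natl. Qed.

Section Main.
Variables (k : fieldType) (n : nat) (gens : seq (lat n)) (A : comAlgType k)
  (chi : lat n -> A) (D : nat -> A -> A) (e : lat n).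
Local Notation S := (in_dualM gens).
Hypothesis sc : strongly_convex gens.
Hypothesis hsa : is_semigroup_algebra S chi.
Hypothesis hD : is_LFIHD D.
Hypothesis hnt : ~ trivial_LFIHD D.
Hypothesis hhom : homogeneous_of_degree S chi D e.
Local Notation dg := (deg hsa hD hhom).

Lemma ker_sum (s : seq (lat n)) (c : lat n -> k) :
  (forall m, m \in s -> S m /\ dg m = 0%N) -> in_kernel D (\sum_(m <- s) c m *: chi m).
Proof.
move=> h i hi; rewrite (D_sum hD); apply: big1_seq => m /h [hm h0].
by rewrite (D_scale hD) (deg0_ker hm h0 hi) scaler0.
Qed.

Lemma exists_pos : exists m, S m /\ (0 < dg m)%N.
Proof.
apply: NNPP => hno; apply: hnt => f.
case: hsa => _ _ hsp _; have [s [c [hs ->]]] := hsp f.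
apply: ker_sum => m hm; split; first exact: hs.
case: (posnP (dg m)) => // hp; case: hno; exists m; split => //; exact: hs.
Qed.

Variables (m0 v : lat n).
Hypothesis hm0 : S m0.
Hypothesis hpos : forall g, g \in gens -> g != 0 -> 0 < pairZ m0 g.
Hypothesis hv : forall m, S m -> (dg m)%:Z = pairZ m v.

Lemma ev : pairZ e v = -1.
Proof.
have [m1 [hm1 hd]] := exists_pos.
have [hS h0] := key hm1 hd.
have := hv hS; rewrite h0 pairZDl pairZMnl -hv // -mulr_natr.
set d := dg m1 in hd *; set x := pairZ e v.
have : 0 < (d%:R : int) by rewrite ltr0n.
move=> h1 h2; nia.
Qed.

Lemma v_nz : v != 0.
Proof. by apply/eqP => h; have := ev; rewrite h pairZ0r. Qed.

Lemma v_cone : in_cone gens (toQ v).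
Proof.
apply: dual_farkas => m hm; rewrite pairQ_toQ -hv // ler0z; exact: ler0n.
Qed.

Lemma Spres m : S m -> S (m + e *+ dg m).
Proof.
move=> hm; case: (posnP (dg m)) => [->|hp]; first by rewrite mulr0n addr0.
by case: (key hm hp).
Qed.

Definition P (w : latQ n) := w + pairQ (toQ e) w *: toQ v.

Lemma pairQ_P m w : S m -> pairQ (toQ m) (P w) = pairQ (toQ (m + e *+ dg m)) w.
Proof.
move=> hm; rewrite /P pairQDr pairQZr pairQ_toQ -hv // toQD toQMn pairQDl pairQMnl.
by rewrite -mulr_natr mulrC -pmulrn.
Qed.

Lemma P_cone w : in_cone gens w -> in_cone gens (P w).
Proof.
move=> hw; apply: dual_farkas => m hm; rewrite pairQ_P //.
by apply: (Spres hm).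
Qed.

Lemma P_v : P (toQ v) = 0.
Proof. by rewrite /P pairQ_toQ ev scaleN1r subrr. Qed.

Lemma primitive_v : primitive v.
Proof.
move=> d w hw; have := ev; rewrite hw pairZZr => h.
have h1 : `|d| * `|pairZ e w| = 1 by rewrite -normrM h normrN normr1.
have h2 : `|d| = 1.
  have hb : 0 < `|pairZ e w|.
    by rewrite normr_gt0; apply/eqP => z; move: h1; rewrite z normr0 mulr0.
  have ha : 0 < `|d|.
    by rewrite normr_gt0; apply/eqP => z; move: h1; rewrite z normr0 mul0r.
  have : `|d| <= `|d| * `|pairZ e w| by rewrite ler_peMr // ltW.
  rewrite h1; lia.
lia.
Qed.

Lemma ray_v : is_ray gens v.
Proof.
split; first exact: primitive_v.
exists (toQ (m0 + e *+ dg m0)); split; first exact: Spres hm0.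
move=> w; split.
  move=> [hw h0].
  have hP : P w = 0 by apply: (cone_zero hm0 hpos (P_cone hw)); rewrite pairQ_P.
  set t := - pairQ (toQ e) w.
  have hwt : w = t *: toQ v.
    by move/eqP: hP; rewrite /P addr_eq0 => /eqP ->; rewrite scaleNr.
  exists t; split => //.
  rewrite leNgt; apply/negP => ht.
  have hneg : in_cone gens (- toQ v).
    have -> : - toQ v = (- t^-1) *: w.
      by rewrite hwt scalerA mulNr mulVf ?lt_eqF // scaleN1r.
    by apply: in_cone_scale => //; rewrite oppr_ge0 invr_le0 ltW.
  have := sc v_cone hneg; rewrite -toQ0 => /toQ_inj /eqP.
  by rewrite (negbTE v_nz).
move=> [t [ht ->]]; split; first exact: in_cone_scale v_cone.
by rewrite pairQZr -pairQ_P // P_v pairQ0r mulr0.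
Qed.

Lemma sum_undup (V : nmodType) (s : seq (lat n)) (F : lat n -> V) :
  \sum_(m <- s) F m = \sum_(m <- undup s) F m *+ count_mem m s.
Proof.
rewrite -big_undup_iterop_count; apply: eq_bigr => i _.
by rewrite Monoid.iteropE iter_addr_0.
Qed.

Lemma indep_D (s : seq (lat n)) (c : lat n -> k) i : uniq s -> (forall m, m \in s -> S m) ->
  D i (\sum_(m <- s) c m *: chi m) = 0 -> forall m, m \in s -> c m * C hhom i m = 0.
Proof.
move=> us hs hD0 m hm; apply/eqP; apply: contraT => nz.
set s2 := [seq m <- s | c m * C hhom i m != 0].
have hm2 : m \in s2 by rewrite mem_filter nz hm.
have eq1 : D i (\sum_(m <- s) c m *: chi m) =
    \sum_(m' <- map (fun m => m + e *+ i) s2) (c (m' - e *+ i) * C hhom i (m' - e *+ i)) *: chi m'.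
  rewrite big_map (D_sum hD) big_filter [in RHS]big_rmcond_in.
    apply: eq_big_seq => x hx; rewrite (D_scale hD) (CP hhom _ (hs x hx)) scalerA addrK //.
  by move=> x hx; rewrite negbK addrK => /eqP ->; rewrite scale0r.
have hu : uniq (map (fun m => m + e *+ i) s2).
  by rewrite (map_inj_uniq (addIr _)) filter_uniq.
have hS2 : forall m', m' \in map (fun m => m + e *+ i) s2 -> S m'.
  move=> m' /mapP [x hx ->]; move: hx; rewrite mem_filter => /andP [nzx hx].
  move: nzx; rewrite mulf_eq0 negb_or => /andP [_ hh]; exact: (CS (hs x hx) hh).
have hz : \sum_(m' <- map (fun m => m + e *+ i) s2)
    (c (m' - e *+ i) * C hhom i (m' - e *+ i)) *: chi m' = 0 by rewrite -eq1.
have := indep hsa hu hS2 hz (map_f _ hm2) => /=.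
by rewrite addrK => h; move: nz; rewrite h eqxx.
Qed.


Lemma dg0_of_pair m : S m -> pairZ m v = 0 -> dg m = 0%N.
Proof. by move=> hm h; have := hv hm; rewrite h => /eqP; rewrite -[0]/(Posz 0) eqz_nat => /eqP. Qed.

Lemma ker_iff f : in_kernel D f <-> in_face_algebra gens chi v f.
Proof.
split; last first.
  move=> [s [c [hs ->]]]; apply: ker_sum => m hm; have [h1 h2] := hs m hm.
  by split => //; apply: dg0_of_pair.
move=> hk.
case: hsa => _ _ hsp _; have [s [c [hs hf]]] := hsp f.
set c' := fun m => c m *+ count_mem m s.
have hf' : f = \sum_(m <- undup s) c' m *: chi m.
  by rewrite hf sum_undup; apply: eq_bigr => m _; rewrite /c' scalerMnl.
have hs' : forall m, m \in undup s -> S m by move=> m; rewrite mem_undup; apply: hs.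
have h0 : forall m, m \in undup s -> c' m != 0 -> dg m = 0%N.
  move=> m hm nz; case: (posnP (dg m)) => // hp.
  have := indep_D (c := c') (undup_uniq s) hs' (i := dg m) _ hm.
  rewrite -hf'; move=> /(_ (hk _ hp)) /eqP; rewrite mulf_eq0 (negbTE nz) /=.
  by rewrite (negbTE (@C_deg _ _ _ _ _ _ _ hsa hD hhom m (hs' m hm))).
exists [seq m <- undup s | c' m != 0], c'; split.
  move=> m; rewrite mem_filter => /andP [nz hm]; split; first exact: hs'.
  by rewrite -(hv (hs' m hm)) (h0 m hm nz).
rewrite hf' big_filter [in RHS]big_rmcond //.
by move=> m; rewrite negbK => /eqP ->; rewrite scale0r.
Qed.

Lemma P_scale t w : P (t *: w) = t *: P w.
Proof. by rewrite /P pairQZr scalerDr scalerA. Qed.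

Lemma dem rho' : is_ray gens rho' -> rho' <> v -> 0 <= pairZ e rho'.
Proof.
move=> [prim [u' [hu' hface]]] hne; rewrite leNgt; apply/negP => hz.
set z := pairZ e rho' in hz.
have [hr hr0] : in_cone gens (toQ rho') /\ pairQ u' (toQ rho') = 0.
  by apply/hface; exists 1; rewrite scale1r ler01.
have hPr := P_cone hr.
have eq1 : toQ rho' = P (toQ rho') + (- z)%:~R *: toQ v.
  by rewrite /P pairQ_toQ -/z intrN scaleNr addrK.
have a1 := hu' _ hPr.
have a2 := hu' _ v_cone.
have hzQ : 0 < ((- z)%:~R : rat) by rewrite ltr0z oppr_gt0.
have a3 : pairQ u' (toQ v) = 0.
  move: hr0; rewrite {1}eq1 pairQDr pairQZr => h.
  have : (- z)%:~R * pairQ u' (toQ v) <= 0 by lra.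
  rewrite pmulr_rle0 // => h2; apply/eqP; rewrite eq_le h2 a2.
  done.
have [t [ht htv]] := (hface (toQ v)).1 (conj v_cone a3).
have tnz : t != 0.
  apply/eqP => t0; move: htv; rewrite t0 scale0r -toQ0 => /toQ_inj /eqP.
  by rewrite (negbTE v_nz).
have hP0 : P (toQ rho') = 0.
  have := P_v; rewrite htv P_scale => /eqP; rewrite scaler_eq0 (negbTE tnz) /=.
  by move/eqP.
move: eq1; rewrite hP0 add0r -toQZ => /toQ_inj hrho.
have := prim _ _ hrho => -[h1|h1].
  by apply: hne; rewrite hrho h1 scale1r.
by move: hz; rewrite -oppr_gt0 h1 ltr0N1.
Qed.
End Main.

Unset Implicit Arguments.
Theorem lemma5p4p3 (k : fieldType) (n : nat) (gens : seq (lat n))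
    (A : comAlgType k) (chi : lat n -> A) (D : nat -> A -> A) (e : lat n) :
  nonzero_cone gens -> strongly_convex gens ->
  is_semigroup_algebra (in_dualM gens) chi ->
  is_LFIHD D -> ~ trivial_LFIHD D ->
  homogeneous_of_degree (in_dualM gens) chi D e ->
  exists rho : lat n,
    is_ray gens rho /\
    (forall f : A, in_kernel D f <-> in_face_algebra gens chi rho f) /\
    demazure_root_with gens e rho.
Proof.
move=> _ sc hsa hD hnt hhom.
have [m0 [hm0 hpos]] := gordan sc.
have hadd := deg_add hsa hD hhom.
have [v hv] := linearize hpos hadd.
have hray := ray_v sc hnt hm0 hpos hv.
exists v; split => //; split.
  exact: ker_iff hv.
split => //; split; first by have := ev hnt hv.
by move=> rho' hr hne; apply: (dem hnt hv).
Qed.
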